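(* Consider the controlled impulsive system $\dot x(t)=Ax(t)+B_cu_c(t)$ for $t\ne t_k$, $x(t_k^+)=Jx(t_k)+B_du_d(t_k)$, with $A,J\in\mathbb{R}^{n\times n}$, $B_c\in\mathbb{R}^{n\times m_c}$, $B_d\in\mathbb{R}^{n\times m_d}$, and let $\bar T>0$. Assume there exist a continuously differentiable diagonal-matrix-valued function $X:[0,\bar T]\to\mathbb{D}^n$ with $X(\tau)$ nonsingular for all $\tau$ and $X(0)\in\mathbb{D}^n_{\succ0}$, a continuous $U:[0,\bar T]\to\mathbb{R}^{m_c\times n}$, a matrix $U_d\in\mathbb{R}^{m_d\times n}$ and scalars $\varepsilon,\alpha>0$ such that, for all $\tau\in[0,\bar T]$, $AX(\tau)+B_cU(\tau)+\alpha I_n\ge0$, $JX(\bar T)+B_dU_d\ge0$, $\big[-\dot X(\tau)+AX(\tau)+B_cU(\tau)\big]\mathbf{1}_n<0$ and $\big[JX(\bar T)+B_dU_d-X(0)+\varepsilon I_n\big]\mathbf{1}_n\le0$. Define $K_c(\tau)=U(\tau)X(\tau)^{-1}$ and $K_d=U_dX(\bar T)^{-1}$ and the controller $u_c(t_k+\tau)=K_c(\tau)x(t_k+\tau)$ for $\tau\in(0,\bar T]$, $u_d(t_k)=K_dx(t_k)$. Then $A+B_cK_c(\tau)$ is Metzler for all $\tau\in[0,\bar T]$, $J+B_dK_d$ is nonnegative, $\big[(J+B_dK_d)\Psi(\bar T)-I_n\big]X(0)\mathbf{1}_n<0$ where $\frac{d}{ds}\Psi(s)=(A+B_cK_c(s))\Psi(s)$,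 $\Psi(0)=I_n$, and the closed-loop system is positive and asymptotically stable under constant dwell-time $\bar T$.
   Context: $\mathbb{D}^n$ is the set of $n\times n$ diagonal matrices and $\mathbb{D}^n_{\succ0}$ those with positive diagonal entries. Matrix/vector inequalities are entrywise; $\mathbf{1}_n$ is the vector of ones. $x(t^+)=\lim_{s\downarrow t}x(s)$. A matrix is Metzler if its off-diagonal entries are nonnegative. Constant dwell-time $\bar T$ means $t_{k+1}-t_k=\bar T$ for all $k$; asymptotic stability means global asymptotic stability of the zero solution. *)

(* Defs.v *)
(* classical reals.  Matrices are represented as functions
   nat -> nat -> R, only the entries with indices below the relevant
   dimensions matter; vectors as nat -> R. *)
From Stdlib Require Import Reals Lra Lia.
Open Scope R_scope.

Fixpoint rsum (p : nat) (f : nat -> R) : R :=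
  match p with
  | O => 0
  | S q => rsum q f + f q
  end.

Definition Mat := nat -> nat -> R.
Definition Vec := nat -> R.

Definition mmul (p : nat) (A B : Mat) : Mat :=
  fun i j => rsum p (fun k => A i k * B k j).
Definition madd (A B : Mat) : Mat := fun i j => A i j + B i j.
Definition msub (A B : Mat) : Mat := fun i j => A i j - B i j.
Definition mscal (c : R) (A : Mat) : Mat := fun i j => c * A i j.
Definition Id : Mat := fun i j => if Nat.eqb i j then 1 else 0.
Definition mvec (p : nat) (A : Mat) (v : Vec) : Vec :=
  fun i => rsum p (fun j => A i j * v j).
Definition ones : Vec := fun _ => 1.

Definition is_diag (n : nat) (X : Mat) : Prop :=
  forall i j, (i < n)%nat -> (j < n)%nat -> i <> j -> X i j = 0.
Definition diag_inv (X : Mat) : Mat :=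
  fun i j => if Nat.eqb i j then / X i i else 0.

Definition mat_nonneg (m p : nat) (A : Mat) : Prop :=
  forall i j, (i < m)%nat -> (j < p)%nat -> 0 <= A i j.
Definition metzler (n : nat) (A : Mat) : Prop :=
  forall i j, (i < n)%nat -> (j < n)%nat -> i <> j -> 0 <= A i j.
Definition vec_neg (n : nat) (v : Vec) : Prop :=
  forall i, (i < n)%nat -> v i < 0.
Definition vec_nonpos (n : nat) (v : Vec) : Prop :=
  forall i, (i < n)%nat -> v i <= 0.

Definition deriv_within (D : R -> Prop) (f : R -> R) (x l : R) : Prop :=
  limit1_in (fun h => (f h - f x) / (h - x)) (fun h => D h /\ h <> x) l x.
Definition cont_within (D : R -> Prop) (f : R -> R) (x : R) : Prop :=
  limit1_in f D (f x) x.

Definition Icc (a b : R) : R -> Prop := fun t => a <= t <= b.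

Definition vnorm (n : nat) (v : Vec) : R := rsum n (fun i => Rabs (v i)).

(* Solutions of the closed-loop impulsive system with impulse times
   t_k = k * T (k = 0,1,2,...):
     xdot(t) = Ac(t - t_k) x(t)   for t in (t_k, t_k + T],
     x(t_k^+) = Jd x(t_k).
   x(t_k) denotes the (left-continuous) value before the jump. *)
Definition closed_loop_sol (n : nat) (Ac : R -> Mat) (Jd : Mat) (T : R)
  (x : R -> Vec) : Prop :=
  forall k : nat,
    (forall i, (i < n)%nat ->
       limit1_in (fun t => x t i) (fun t => INR k * T < t)
                 (mvec n Jd (x (INR k * T)) i) (INR k * T)) /\
    (forall t, INR k * T < t <= INR k * T + T ->
     forall i, (i < n)%nat ->
       deriv_within (fun s => INR k * T < s <= INR k * T + T)
                    (fun s => x s i) t (mvec n (Ac (t - INR k * T)) (x t) i)).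

Definition closed_loop_positive (n : nat) (Ac : R -> Mat) (Jd : Mat) (T : R)
  : Prop :=
  forall x, closed_loop_sol n Ac Jd T x ->
    (forall i, (i < n)%nat -> 0 <= x 0 i) ->
    forall t, 0 <= t -> forall i, (i < n)%nat -> 0 <= x t i.

Definition closed_loop_GAS (n : nat) (Ac : R -> Mat) (Jd : Mat) (T : R)
  : Prop :=
  (forall eps, 0 < eps -> exists delta, 0 < delta /\
     forall x, closed_loop_sol n Ac Jd T x -> vnorm n (x 0) < delta ->
       forall t, 0 <= t -> vnorm n (x t) < eps) /\
  (forall x, closed_loop_sol n Ac Jd T x ->
     forall eps, 0 < eps -> exists T0, forall t, T0 <= t -> vnorm n (x t) < eps).

(* Main.v *)
Require Import Defs.
From Stdlib Require Import Reals Lra Lia Classical ZArith.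
Open Scope R_scope.

Lemma lim_iff f D l x0 : limit1_in f D l x0 <->
  forall e, 0 < e -> exists alp, 0 < alp /\ forall h, D h -> Rabs (h - x0) < alp -> Rabs (f h - l) < e.
Proof.
  unfold limit1_in, limit_in; simpl; unfold Rdist; split.
  - intros H e He. destruct (H e He) as [alp [Ha H1]]. exists alp; split; auto.
  - intros H e He. destruct (H e He) as [alp [Ha H1]]. exists alp; split; auto.
    intros h [Hd Hh]; auto.
Qed.

Lemma lim_transport f g D E l x0 y0 s r :
  limit1_in f D l x0 -> 0 < r -> y0 + s = x0 ->
  (forall h, E h -> Rabs (h - y0) < r -> D (h + s) /\ g h = f (h + s)) ->
  limit1_in g E l y0.
Proof.
  rewrite !lim_iff. intros H Hr Hy HE e He.
  destruct (H e He) as [alp [Ha H1]]. exists (Rmin alp r); split.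
  - apply Rmin_pos; auto.
  - intros h Eh Hh. destruct (HE h Eh) as [D1 G1].
    + eapply Rlt_le_trans; [exact Hh|apply Rmin_r].
    + rewrite G1. apply H1; auto.
      replace (h + s - x0) with (h - y0) by (rewrite <- Hy; ring).
      eapply Rlt_le_trans; [exact Hh|apply Rmin_l].
Qed.

Lemma lim_const D c x0 : limit1_in (fun _ => c) D c x0.
Proof. rewrite lim_iff. intros e He. exists 1; split; [lra|]. intros. rewrite Rminus_diag, Rabs_R0; auto. Qed.

Definition ctw (D : R -> Prop) (f : R -> R) (x : R) : Prop :=
  forall e, 0 < e -> exists alp, 0 < alp /\ forall h, D h -> Rabs (h - x) < alp -> Rabs (f h - f x) < e.

Lemma deriv_ctw D f x l : deriv_within D f x l -> ctw D f x.
Proof.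
  unfold deriv_within. rewrite lim_iff. intros H e He.
  destruct (H 1 Rlt_0_1) as [alp [Ha H1]].
  exists (Rmin alp (e / (Rabs l + 1))); split.
  - apply Rmin_pos; auto. apply Rdiv_lt_0_compat; auto. pose proof (Rabs_pos l); lra.
  - intros h Dh Hh. destruct (Req_dec h x) as [->|Hne].
    + rewrite Rminus_diag, Rabs_R0; auto.
    + assert (Hq : Rabs ((f h - f x) / (h - x) - l) < 1).
      { apply H1; [split; auto|]. eapply Rlt_le_trans; [exact Hh|apply Rmin_l]. }
      assert (Hx : h - x <> 0) by lra.
      replace (f h - f x) with ((f h - f x) / (h - x) * (h - x)) by (field; auto).
      rewrite Rabs_mult.
      assert (Hb : Rabs ((f h - f x) / (h - x)) <= Rabs l + 1).
      { pose proof (Rabs_triang_inv ((f h - f x) / (h - x)) l). lra. }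
      assert (Hh2 : Rabs (h - x) < e / (Rabs l + 1)) by (eapply Rlt_le_trans; [exact Hh|apply Rmin_r]).
      assert (Hp : 0 < Rabs l + 1) by (pose proof (Rabs_pos l); lra).
      apply Rle_lt_trans with ((Rabs l + 1) * Rabs (h - x)).
      * apply Rmult_le_compat_r; auto. apply Rabs_pos.
      * apply Rmult_lt_reg_l with (/ (Rabs l + 1)). apply Rinv_0_lt_compat; auto.
        rewrite <- Rmult_assoc, Rinv_l by lra. rewrite Rmult_1_l.
        unfold Rdiv in Hh2. lra.
Qed.

Lemma deriv_pos_right D f x l : deriv_within D f x l -> 0 < l ->
  exists alp, 0 < alp /\ forall h, D h -> x < h < x + alp -> f x < f h.
Proof.
  unfold deriv_within. rewrite lim_iff. intros H Hl.
  destruct (H l Hl) as [alp [Ha H1]]. exists alp; split; auto.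
  intros h Dh Hh.
  assert (Hq : Rabs ((f h - f x) / (h - x) - l) < l).
  { apply H1; [split; [auto|lra]|]. rewrite Rabs_right; lra. }
  apply Rabs_def2 in Hq. destruct Hq as [_ Hq].
  assert (Hp : 0 < (f h - f x) / (h - x)) by lra.
  assert (Hhx : 0 < h - x) by lra.
  assert (0 < f h - f x).
  { replace (f h - f x) with ((f h - f x) / (h - x) * (h - x)) by (field; lra).
    apply Rmult_lt_0_compat; auto. }
  lra.
Qed.

Lemma deriv_transport D E f g x y l s r :
  deriv_within D f x l -> 0 < r -> y + s = x ->
  (forall h, E h -> Rabs (h - y) < r -> D (h + s) /\ g h = f (h + s)) ->
  g y = f x ->
  deriv_within E g y l.
Proof.
  unfold deriv_within. intros H Hr Hy HE Hg.
  eapply lim_transport with (s := s) (r := r); eauto.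
  intros h [Eh Hne] Hh. destruct (HE h Eh Hh) as [D1 G1]. split.
  - split; auto. lra.
  - rewrite G1, Hg. f_equal. lra.
Qed.

Lemma deriv_lin D f g x l1 l2 c e :
  deriv_within D f x l1 -> deriv_within D g x l2 ->
  deriv_within D (fun h => c * f h + e * g h) x (c * l1 + e * l2).
Proof.
  unfold deriv_within. intros H1 H2.
  pose proof (limit_mul _ _ _ _ _ _ (lim_const _ c x) H1) as M1.
  pose proof (limit_mul _ _ _ _ _ _ (lim_const _ e x) H2) as M2.
  pose proof (limit_plus _ _ _ _ _ _ M1 M2) as M.
  eapply lim_transport with (s := 0) (r := 1); [exact M|lra|ring|].
  intros h [Dh Hne] _. rewrite Rplus_0_r. split; [split; auto|].
  field. lra.
Qed.

Lemma deriv_ext D f g x l : deriv_within D f x l -> (forall h, f h = g h) -> deriv_within D g x l.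
Proof.
  intros H He. eapply deriv_transport with (s := 0) (r := 1); eauto; try lra.
  intros; rewrite Rplus_0_r; auto.
Qed.

Lemma rsum_ext p f g : (forall k, (k < p)%nat -> f k = g k) -> rsum p f = rsum p g.
Proof. induction p; simpl; intros; auto. rewrite IHp by (intros; apply H; lia). rewrite H by lia. auto. Qed.
Lemma rsum_plus p f g : rsum p (fun k => f k + g k) = rsum p f + rsum p g.
Proof. induction p; simpl; [ring|]. rewrite IHp; ring. Qed.
Lemma rsum_scal p c f : rsum p (fun k => c * f k) = c * rsum p f.
Proof. induction p; simpl; [ring|]. rewrite IHp; ring. Qed.
Lemma rsum_opp p f : rsum p (fun k => - f k) = - rsum p f.
Proof. induction p; simpl; [ring|]. rewrite IHp; ring. Qed.
Lemma rsum_const p c : rsum p (fun _ => c) = INR p * c.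
Proof. induction p; simpl rsum; [simpl; ring|]. rewrite IHp, S_INR; ring. Qed.
Lemma rsum_le p f g : (forall k, (k < p)%nat -> f k <= g k) -> rsum p f <= rsum p g.
Proof. induction p; simpl; intros; [lra|]. pose proof (IHp (fun k Hk => H k ltac:(lia))). pose proof (H p ltac:(lia)). lra. Qed.
Lemma rsum_nonneg p f : (forall k, (k < p)%nat -> 0 <= f k) -> 0 <= rsum p f.
Proof. intros. assert (E : rsum p (fun _ => 0) = 0) by (rewrite rsum_const; ring). rewrite <- E. apply rsum_le; auto. Qed.
Lemma rsum_single p f j : (j < p)%nat -> (forall k, (k < p)%nat -> k <> j -> f k = 0) -> rsum p f = f j.
Proof.
  induction p; intros Hj H; [lia|]. simpl.
  destruct (Nat.eq_dec j p) as [->|Hne].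
  - rewrite (rsum_ext p f (fun _ => 0)) by (intros; apply H; lia). rewrite rsum_const; ring.
  - rewrite IHp by (auto; lia). rewrite (H p) by lia. ring.
Qed.
Lemma rsum_swap p q F : rsum p (fun k => rsum q (fun j => F k j)) = rsum q (fun j => rsum p (fun k => F k j)).
Proof.
  induction p; simpl.
  - rewrite rsum_const; ring.
  - rewrite IHp. rewrite <- rsum_plus. auto.
Qed.
Lemma rsum_abs p f : Rabs (rsum p f) <= rsum p (fun k => Rabs (f k)).
Proof. induction p; simpl. rewrite Rabs_R0; lra. eapply Rle_trans; [apply Rabs_triang|]. lra. Qed.
Lemma rsum_ge_term p f j : (j < p)%nat -> (forall k, (k < p)%nat -> 0 <= f k) -> f j <= rsum p f.
Proof.
  induction p; intros Hj H; [lia|]. simpl.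
  destruct (Nat.eq_dec j p) as [->|Hne].
  - assert (0 <= rsum p f) by (apply rsum_nonneg; intros; apply H; lia). lra.
  - assert (f j <= rsum p f) by (apply IHp; [lia|intros; apply H; lia]). pose proof (H p ltac:(lia)). lra.
Qed.

Lemma cont_ind a b (S : R -> Prop) : a <= b -> S a ->
  (forall t, a <= t < b -> (forall s, a <= s <= t -> S s) ->
     exists d, 0 < d /\ forall s, t < s < t + d -> S s) ->
  (forall t, a < t <= b -> (forall s, a <= s < t -> S s) -> S t) ->
  forall t, a <= t <= b -> S t.
Proof.
  intros Hab Sa Hfw Hcl.
  set (E := fun t => a <= t <= b /\ forall s, a <= s <= t -> S s).
  assert (Hb : bound E) by (exists b; intros t [Ht _]; lra).
  assert (He : exists x, E x).
  { exists a. split; [lra|]. intros s Hs. replace s with a by lra; auto. }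
  destruct (completeness E Hb He) as [m [Hub Hlub]].
  assert (Ham : a <= m) by (apply Hub; destruct He; unfold E; split; [lra|]; intros s Hs; replace s with a by lra; auto).
  assert (Hmb : m <= b) by (apply Hlub; intros t [Ht _]; lra).
  assert (Hbelow : forall s, a <= s < m -> S s).
  { intros s Hs. destruct (classic (S s)) as [|HnS]; auto. exfalso.
    assert (m <= s); [|lra]. apply Hlub. intros t [Ht Hall].
    destruct (Rle_or_lt t s); auto. exfalso. apply HnS. apply Hall. lra. }
  assert (Sm : S m).
  { destruct (Req_dec m a) as [->|Hne]; auto. apply Hcl; [lra|]. auto. }
  assert (Hall : forall s, a <= s <= m -> S s).
  { intros s Hs. destruct (Req_dec s m) as [->|]; auto. apply Hbelow. lra. }
  assert (Hmb' : m = b).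
  { destruct (Req_dec m b); auto. exfalso.
    destruct (Hfw m ltac:(lra) Hall) as [d [Hd Hs]].
    set (t' := Rmin (m + d / 2) b).
    assert (Et : E t').
    { split. unfold t'. split. apply Rmin_glb; lra. apply Rmin_r.
      intros s Hs'. destruct (Rle_or_lt s m). apply Hall; lra. apply Hs. split; auto.
      assert (s <= m + d/2) by (eapply Rle_trans; [apply Hs'|apply Rmin_l]). lra. }
    assert (t' <= m) by (apply Hub; auto).
    unfold t' in *. unfold Rmin in *. destruct (Rle_dec (m + d/2) b); lra. }
  intros t Ht. apply Hall. lra.
Qed.

Lemma fin_min (n : nat) (P : nat -> R -> Prop) :
  (forall i d d', 0 < d' <= d -> P i d -> P i d') ->
  (forall i, (i < n)%nat -> exists d, 0 < d /\ P i d) ->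
  exists d, 0 < d /\ forall i, (i < n)%nat -> P i d.
Proof.
  intros Hm. induction n; intros H.
  - exists 1; split; [lra|]. intros; lia.
  - destruct IHn as [d1 [Hd1 H1]]. intros; apply H; lia.
    destruct (H n ltac:(lia)) as [d2 [Hd2 H2]].
    exists (Rmin d1 d2); split. apply Rmin_pos; auto.
    intros i Hi. destruct (Nat.eq_dec i n) as [->|].
    + apply Hm with d2; auto. split. apply Rmin_pos; auto. apply Rmin_r.
    + apply Hm with d1; [split; [apply Rmin_pos; auto|apply Rmin_l]|]. apply H1; lia.
Qed.

Lemma fin_max (n : nat) (P : nat -> R -> Prop) :
  (forall i d d', d <= d' -> P i d -> P i d') ->
  (forall i, (i < n)%nat -> exists d, P i d) ->
  exists d, forall i, (i < n)%nat -> P i d.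
Proof.
  intros Hm. induction n; intros H.
  - exists 0. intros; lia.
  - destruct IHn as [d1 H1]. intros; apply H; lia.
    destruct (H n ltac:(lia)) as [d2 H2].
    exists (Rmax d1 d2).
    intros i Hi. destruct (Nat.eq_dec i n) as [->|].
    + apply Hm with d2; auto. apply Rmax_r.
    + apply Hm with d1; [apply Rmax_l|]. apply H1; lia.
Qed.

Lemma le_eps y b : (forall d, 0 < d -> 0 <= y + d * b) -> 0 <= y.
Proof.
  intros H. destruct (Rle_or_lt 0 y); auto. exfalso.
  destruct (Rle_or_lt b 0).
  - specialize (H 1 Rlt_0_1). lra.
  - specialize (H (- y / (2 * b))). assert (0 < - y / (2 * b)).
    { apply Rdiv_lt_0_compat; lra. }
    specialize (H H2). replace (y + - y / (2 * b) * b) with (y / 2) in H by (field; lra). lra.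
Qed.

Lemma bounded_on a b f : a <= b -> (forall t, a <= t <= b -> ctw (fun s => a <= s <= b) f t) ->
  exists B, forall s, a <= s <= b -> f s <= B.
Proof.
  intros Hab Hc.
  assert (H : forall t, a <= t <= b -> exists B, forall s, a <= s <= t -> f s <= B).
  { apply cont_ind; auto.
    - exists (f a). intros s Hs. replace s with a by lra. lra.
    - intros t Ht Hall. destruct (Hall t ltac:(lra)) as [B HB].
      destruct (Hc t ltac:(lra) 1 Rlt_0_1) as [alp [Ha H1]].
      exists (Rmin alp (b - t)); split. apply Rmin_pos; lra.
      intros s Hs. exists (Rmax B (f t + 1)). intros r Hr.
      destruct (Rle_or_lt r t). eapply Rle_trans; [apply HB; lra|apply Rmax_l].
      eapply Rle_trans; [|apply Rmax_r].
      assert (Rabs (r - t) < alp).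
      { rewrite Rabs_right by lra. assert (s < t + alp) by (pose proof (Rmin_l alp (b-t)); lra). lra. }
      assert (r <= b) by (pose proof (Rmin_r alp (b-t)); lra).
      specialize (H1 r ltac:(lra) H0). apply Rabs_def2 in H1. lra.
    - intros t Ht Hall.
      destruct (Hc t ltac:(lra) 1 Rlt_0_1) as [alp [Ha H1]].
      set (s0 := t - Rmin alp (t - a) / 2).
      assert (Hs0 : a <= s0 < t /\ t - s0 < alp).
      { unfold s0. pose proof (Rmin_l alp (t - a)). pose proof (Rmin_r alp (t - a)).
        assert (0 < Rmin alp (t - a)) by (apply Rmin_pos; lra). lra. }
      destruct (Hall s0 ltac:(lra)) as [B HB]. exists (Rmax B (f t + 1)). intros r Hr.
      destruct (Rle_or_lt r s0). eapply Rle_trans; [apply HB; lra|apply Rmax_l].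
      eapply Rle_trans; [|apply Rmax_r].
      assert (Hrt : Rabs (r - t) < alp) by (rewrite Rabs_left1 by lra; lra).
      specialize (H1 r ltac:(lra) Hrt). apply Rabs_def2 in H1. lra. }
  destruct (H b ltac:(lra)) as [B HB]. exists B. auto.
Qed.

Lemma find_k T t : 0 < T -> 0 < t -> exists k : nat, INR k * T < t <= INR k * T + T.
Proof.
  intros HT Ht.
  assert (Hg : forall N : nat, forall t, 0 < t <= INR N * T -> exists k : nat, INR k * T < t <= INR k * T + T).
  { induction N; intros t0 Ht0. simpl in Ht0; lra.
    rewrite S_INR in Ht0. destruct (Rle_or_lt t0 (INR N * T)).
    - apply IHN; lra.
    - exists N. lra. }
  destruct (archimed (t / T)) as [H1 _].
  assert (Hz : (0 <= up (t / T))%Z).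
  { apply le_IZR. assert (0 < t / T) by (apply Rdiv_lt_0_compat; auto). lra. }
  apply (Hg (Z.to_nat (up (t / T)))). split; auto.
  rewrite INR_IZR_INZ, Z2Nat.id by auto.
  apply Rlt_le. apply Rmult_lt_reg_r with (/ T). apply Rinv_0_lt_compat; auto.
  rewrite Rmult_assoc, Rinv_r by lra. rewrite Rmult_1_r. exact H1.
Qed.

Lemma mvec_lin p M u w al be i :
  mvec p M (fun j => al * u j + be * w j) i = al * mvec p M u i + be * mvec p M w i.
Proof.
  unfold mvec. rewrite <- !rsum_scal, <- rsum_plus. apply rsum_ext. intros; ring.
Qed.

Lemma mvec_metzler_nonneg n M z i : metzler n M -> (i < n)%nat -> z i = 0 ->
  (forall j, (j < n)%nat -> 0 <= z j) -> 0 <= mvec n M z i.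
Proof.
  intros Hm Hi Hz Hp. unfold mvec. apply rsum_nonneg. intros j Hj.
  destruct (Nat.eq_dec i j) as [->|Hne]. rewrite Hz; lra.
  apply Rmult_le_pos; auto.
Qed.

Lemma comparison n a b (z : R -> Vec) (z0 : Vec) (d : R -> Vec) (M : R -> Mat) :
  a < b ->
  (forall i, (i < n)%nat -> 0 < z0 i) ->
  (forall i, (i < n)%nat -> limit1_in (fun s => z s i) (fun s => a < s) (z0 i) a) ->
  (forall t, a < t <= b -> forall i, (i < n)%nat ->
     deriv_within (fun s => a < s <= b) (fun s => z s i) t (d t i)) ->
  (forall t, a < t <= b -> metzler n (M t)) ->
  (forall t, a < t <= b -> forall i, (i < n)%nat -> mvec n (M t) (z t) i < d t i) ->
  forall t, a < t <= b -> forall i, (i < n)%nat -> 0 <= z t i.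
Proof.
  intros Hab Hz0 Hlim Hder Hmet Hgt.
  assert (H : forall t, a <= t <= b -> t = a \/ forall i, (i < n)%nat -> 0 <= z t i).
  { apply cont_ind; [lra|auto| |].
    - intros t Ht Hall.
      assert (Hex : exists dd, 0 < dd /\ forall i, (i < n)%nat ->
                  forall s, t < s < t + dd -> 0 <= z s i).
      { apply fin_min.
        - intros i dd dd' Hdd HP s Hs. apply HP. lra.
        - intros i Hi. destruct (Req_dec t a) as [->|Hta].
          + pose proof (Hlim i Hi) as L. rewrite lim_iff in L.
            destruct (L (z0 i) (Hz0 i Hi)) as [alp [Ha L1]]. exists alp; split; auto.
            intros s Hs. specialize (L1 s ltac:(lra) ltac:(rewrite Rabs_right; lra)).
            apply Rabs_def2 in L1. lra.
          + destruct (Hall t ltac:(lra)) as [|Hzt]; [lra|].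
            destruct (Req_dec (z t i) 0) as [Hz|Hz].
            * assert (Hd : 0 < d t i).
              { eapply Rle_lt_trans; [|apply Hgt; auto; lra].
                apply mvec_metzler_nonneg; auto. apply Hmet; lra. }
              destruct (deriv_pos_right _ _ _ _ (Hder t ltac:(lra) i Hi) Hd) as [alp [Ha H1]].
              exists (Rmin alp (b - t)). split. apply Rmin_pos; lra.
              intros s Hs. pose proof (Rmin_l alp (b - t)). pose proof (Rmin_r alp (b - t)).
              specialize (H1 s ltac:(lra) ltac:(lra)). lra.
            * assert (Hp : 0 < z t i) by (pose proof (Hzt i Hi); lra).
              destruct (deriv_ctw _ _ _ _ (Hder t ltac:(lra) i Hi) _ Hp) as [alp [Ha H1]].
              exists (Rmin alp (b - t)). split. apply Rmin_pos; lra.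
              intros s Hs. pose proof (Rmin_l alp (b - t)). pose proof (Rmin_r alp (b - t)).
              specialize (H1 s ltac:(lra) ltac:(rewrite Rabs_right; lra)).
              apply Rabs_def2 in H1. lra. }
      destruct Hex as [dd [Hdd H1]]. exists dd; split; [auto|].
      intros s Hs. right. intros i Hi. apply H1; auto.
    - intros t Ht Hall. right. intros i Hi.
      destruct (Rle_or_lt 0 (z t i)); auto. exfalso.
      destruct (deriv_ctw _ _ _ _ (Hder t Ht i Hi) (- z t i) ltac:(lra)) as [alp [Ha H1]].
      set (s0 := t - Rmin alp (t - a) / 2).
      assert (Hs0 : a < s0 < t /\ t - s0 < alp).
      { unfold s0. pose proof (Rmin_l alp (t - a)). pose proof (Rmin_r alp (t - a)).
        assert (0 < Rmin alp (t - a)) by (apply Rmin_pos; lra). lra. }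
      specialize (H1 s0 ltac:(lra) ltac:(rewrite Rabs_left1; lra)).
      apply Rabs_def2 in H1.
      destruct (Hall s0 ltac:(lra)) as [|Hs]; [lra|]. specialize (Hs i Hi). lra. }
  intros t Ht i Hi. destruct (H t ltac:(lra)) as [|Hs]; [lra|auto].
Qed.

Lemma ctw_lim D E f x l : ctw D f x -> f x = l ->
  (exists r, 0 < r /\ forall h, E h -> Rabs (h - x) < r -> D h) -> limit1_in f E l x.
Proof.
  intros Hc Hl [r [Hr HE]]. rewrite lim_iff. intros e He.
  destruct (Hc e He) as [alp [Ha H1]]. exists (Rmin alp r). split. apply Rmin_pos; auto.
  intros h Eh Hh. rewrite <- Hl. apply H1.
  apply HE; auto. eapply Rlt_le_trans; [exact Hh|apply Rmin_r].
  eapply Rlt_le_trans; [exact Hh|apply Rmin_l].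
Qed.

Lemma deriv_scal D f x l c : deriv_within D f x l -> deriv_within D (fun h => f h * c) x (l * c).
Proof.
  intros H. pose proof (deriv_lin D f f x l l c 0 H H) as H2.
  replace (l * c) with (c * l + 0 * l) by ring.
  eapply deriv_ext; [exact H2|]. intros; simpl; ring.
Qed.

Lemma deriv_rsum D p (F : nat -> R -> R) (L : nat -> R) x :
  (forall j, (j < p)%nat -> deriv_within D (F j) x (L j)) ->
  deriv_within D (fun h => rsum p (fun j => F j h)) x (rsum p L).
Proof.
  induction p; intros H; simpl.
  - unfold deriv_within. eapply lim_transport with (s := 0) (r := 1); [apply (lim_const (fun h => D h /\ h <> x) 0 x)|lra|ring|].
    intros h Dh _. rewrite Rplus_0_r. split; auto. unfold Rdiv; ring.
  - pose proof (deriv_lin D _ _ x _ _ 1 1 (IHp (fun j Hj => H j ltac:(lia))) (H p ltac:(lia))) as H2.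
    replace (rsum p L + L p) with (1 * rsum p L + 1 * L p) by ring.
    eapply deriv_ext; [exact H2|]. intros; simpl; ring.
Qed.

Lemma mvec_assoc p M N v k : mvec p M (fun j => mvec p N v j) k = mvec p (mmul p M N) v k.
Proof.
  unfold mvec, mmul.
  transitivity (rsum p (fun j => rsum p (fun l => M k j * N j l * v l))).
  { apply rsum_ext; intros. rewrite <- rsum_scal. apply rsum_ext; intros; ring. }
  rewrite rsum_swap. apply rsum_ext; intros.
  rewrite Rmult_comm, <- rsum_scal. apply rsum_ext; intros; ring.
Qed.

Lemma gainX n m A B U X i j : is_diag n X -> (j < n)%nat -> X j j <> 0 ->
  madd A (mmul m B (mmul n U (diag_inv X))) i j * X j j = madd (mmul n A X) (mmul m B U) i j.
Proof.
  intros Hd Hj Hx. unfold madd.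
  assert (E1 : mmul n A X i j = A i j * X j j).
  { unfold mmul. apply (rsum_single n (fun k => A i k * X k j)); auto.
    intros k Hk Hne. rewrite (Hd k j); auto; ring. }
  assert (E2 : forall k, mmul n U (diag_inv X) k j = U k j / X j j).
  { intros k. unfold mmul. rewrite (rsum_single n (fun l => U k l * diag_inv X l j) j); auto.
    - unfold diag_inv. rewrite Nat.eqb_refl. unfold Rdiv; ring.
    - intros l Hl Hne. unfold diag_inv. apply Nat.eqb_neq in Hne. rewrite Hne. ring. }
  rewrite E1. unfold mmul at 1. unfold mmul at 2.
  rewrite Rmult_plus_distr_r. f_equal.
  rewrite Rmult_comm, <- rsum_scal. apply rsum_ext. intros k Hk. rewrite E2. field; auto.
Qed.

Lemma nonneg_div y x : 0 <= y * x -> 0 < x -> 0 <= y.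
Proof. intros. destruct (Rle_or_lt 0 y); auto. nra. Qed.

Theorem theorem7 (n mc md : nat) (A J Bc Bd : Mat) (T : R)
  (X dX U : R -> Mat) (Ud : Mat) (eps alpha : R) :
  0 < T ->
  (* X : [0,T] -> D^n, continuously differentiable with derivative dX *)
  (forall tau, Icc 0 T tau -> is_diag n (X tau)) ->
  (forall tau, Icc 0 T tau -> forall i j, (i < n)%nat -> (j < n)%nat ->
     deriv_within (Icc 0 T) (fun s => X s i j) tau (dX tau i j)) ->
  (forall tau, Icc 0 T tau -> forall i j, (i < n)%nat -> (j < n)%nat ->
     cont_within (Icc 0 T) (fun s => dX s i j) tau) ->
  (* X(tau) nonsingular, X(0) positive diagonal *)
  (forall tau, Icc 0 T tau -> forall i, (i < n)%nat -> X tau i i <> 0) ->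
  (forall i, (i < n)%nat -> 0 < X 0 i i) ->
  (* U continuous on [0,T] *)
  (forall tau, Icc 0 T tau -> forall i j, (i < mc)%nat -> (j < n)%nat ->
     cont_within (Icc 0 T) (fun s => U s i j) tau) ->
  0 < eps -> 0 < alpha ->
  (forall tau, Icc 0 T tau ->
     mat_nonneg n n (madd (madd (mmul n A (X tau)) (mmul mc Bc (U tau)))
                          (mscal alpha Id))) ->
  mat_nonneg n n (madd (mmul n J (X T)) (mmul md Bd Ud)) ->
  (forall tau, Icc 0 T tau ->
     vec_neg n (mvec n (madd (msub (mmul n A (X tau)) (dX tau))
                             (mmul mc Bc (U tau))) ones)) ->
  vec_nonpos n (mvec n (madd (msub (madd (mmul n J (X T)) (mmul md Bd Ud)) (X 0))
                             (mscal eps Id)) ones) ->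
  let Kc := fun tau => mmul n (U tau) (diag_inv (X tau)) in
  let Kd := mmul n Ud (diag_inv (X T)) in
  let Ac := fun tau => madd A (mmul mc Bc (Kc tau)) in
  let Jd := madd J (mmul md Bd Kd) in
  (forall tau, Icc 0 T tau -> metzler n (Ac tau)) /\
  mat_nonneg n n Jd /\
  (forall Psi : R -> Mat,
     (forall i j, (i < n)%nat -> (j < n)%nat -> Psi 0 i j = Id i j) ->
     (forall s, Icc 0 T s -> forall i j, (i < n)%nat -> (j < n)%nat ->
        deriv_within (Icc 0 T) (fun r => Psi r i j) s (mmul n (Ac s) (Psi s) i j)) ->
     vec_neg n (mvec n (mmul n (msub (mmul n Jd (Psi T)) Id) (X 0)) ones)) /\
  closed_loop_positive n Ac Jd T /\
  closed_loop_GAS n Ac Jd T.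
Proof.
  intros HT Hdiag HdX HdXc Hnz HX0 HUc Heps Halpha Hmet HJnn Hneg Hnp Kc Kd Ac Jd.
  assert (IccT : Icc 0 T T) by (unfold Icc; lra).
  assert (Icc0 : Icc 0 T 0) by (unfold Icc; lra).
  assert (Xpos : forall tau, Icc 0 T tau -> forall i, (i < n)%nat -> 0 < X tau i i).
  { intros tau Htau i Hi. revert tau Htau.
    apply (cont_ind 0 T (fun t => 0 < X t i i)); [lra|auto| |].
    - intros t Ht Hall. assert (Hp : 0 < X t i i) by (apply Hall; lra).
      destruct (deriv_ctw _ _ _ _ (HdX t ltac:(unfold Icc; lra) i i Hi Hi) _ Hp) as [alp [Ha H1]].
      exists (Rmin alp (T - t)). split. apply Rmin_pos; lra.
      intros s Hs. pose proof (Rmin_l alp (T - t)). pose proof (Rmin_r alp (T - t)).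
      specialize (H1 s ltac:(unfold Icc; lra) ltac:(rewrite Rabs_right; lra)).
      apply Rabs_def2 in H1. lra.
    - intros t Ht Hall. destruct (Rle_or_lt (X t i i) 0) as [Hle|]; auto. exfalso.
      assert (Hlt : X t i i < 0) by (pose proof (Hnz t ltac:(unfold Icc; lra) i Hi); lra).
      destruct (deriv_ctw _ _ _ _ (HdX t ltac:(unfold Icc; lra) i i Hi Hi) (- X t i i) ltac:(lra)) as [alp [Ha H1]].
      set (s0 := t - Rmin alp t / 2).
      assert (Hs0 : 0 < s0 < t /\ t - s0 < alp).
      { unfold s0. pose proof (Rmin_l alp t). pose proof (Rmin_r alp t).
        assert (0 < Rmin alp t) by (apply Rmin_pos; lra). lra. }
      specialize (H1 s0 ltac:(unfold Icc; lra) ltac:(rewrite Rabs_left1; lra)).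
      apply Rabs_def2 in H1. specialize (Hall s0 ltac:(lra)). lra. }
  assert (dXoff : forall tau, Icc 0 T tau -> forall i j, (i < n)%nat -> (j < n)%nat -> i <> j ->
                   dX tau i j = 0).
  { intros tau Htau i j Hi Hj Hij.
    eapply single_limit; [|apply (HdX tau Htau i j Hi Hj)|].
    - intros alp Ha. unfold Icc in Htau. destruct (Rlt_or_le tau T).
      + exists (tau + Rmin alp (T - tau) / 2).
        pose proof (Rmin_l alp (T - tau)). pose proof (Rmin_r alp (T - tau)).
        assert (0 < Rmin alp (T - tau)) by (apply Rmin_pos; lra).
        split. split. unfold Icc; lra. lra. unfold Rdist. rewrite Rabs_right; lra.
      + exists (tau - Rmin alp T / 2).
        pose proof (Rmin_l alp T). pose proof (Rmin_r alp T).
        assert (0 < Rmin alp T) by (apply Rmin_pos; lra).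
        split. split. unfold Icc; lra. lra. unfold Rdist. rewrite Rabs_left1; lra.
    - eapply lim_transport with (s := 0) (r := 1); [apply (lim_const _ 0 tau)|lra|ring|].
      intros h [Dh Hne] _. rewrite Rplus_0_r. split. exact I.
      rewrite (Hdiag h Dh i j), (Hdiag tau Htau i j) by auto. unfold Rdiv; ring. }
  assert (HAcX : forall tau, Icc 0 T tau -> forall i j, (j < n)%nat ->
            Ac tau i j * X tau j j = madd (mmul n A (X tau)) (mmul mc Bc (U tau)) i j).
  { intros tau Htau i j Hj. apply gainX; auto. }
  assert (HJdX : forall i j, (j < n)%nat ->
            Jd i j * X T j j = madd (mmul n J (X T)) (mmul md Bd Ud) i j).
  { intros i j Hj. apply gainX; auto. }
  assert (Hmetz : forall tau, Icc 0 T tau -> metzler n (Ac tau)).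
  { intros tau Htau i j Hi Hj Hij. apply nonneg_div with (X tau j j); [|apply Xpos; auto].
    rewrite HAcX by auto. pose proof (Hmet tau Htau i j Hi Hj) as H1.
    unfold madd, mscal, Id in H1 |- *. apply Nat.eqb_neq in Hij. rewrite Hij in H1. lra. }
  assert (HJdnn : mat_nonneg n n Jd).
  { intros i j Hi Hj. apply nonneg_div with (X T j j); [|apply Xpos; auto].
    rewrite HJdX by auto. apply HJnn; auto. }
  assert (Hg : forall tau, Icc 0 T tau -> forall i, (i < n)%nat ->
            mvec n (Ac tau) (fun j => X tau j j) i < dX tau i i).
  { intros tau Htau i Hi. pose proof (Hneg tau Htau i Hi) as H1. unfold mvec in H1 |- *.
    assert (E : rsum n (fun j => madd (msub (mmul n A (X tau)) (dX tau)) (mmul mc Bc (U tau)) i j * ones j)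
               = rsum n (fun j => Ac tau i j * X tau j j) + - rsum n (fun j => dX tau i j)).
    { rewrite <- rsum_opp, <- rsum_plus. apply rsum_ext. intros j Hj. rewrite HAcX by auto.
      unfold madd, msub, ones. ring. }
    rewrite (rsum_single n (fun j => dX tau i j) i) in E; auto.
    lra. }
  assert (HJv : forall i, (i < n)%nat -> rsum n (fun j => Jd i j * X T j j) <= X 0 i i - eps).
  { intros i Hi. pose proof (Hnp i Hi) as H1. unfold mvec in H1.
    assert (E : rsum n (fun j => madd (msub (madd (mmul n J (X T)) (mmul md Bd Ud)) (X 0)) (mscal eps Id) i j * ones j)
               = rsum n (fun j => Jd i j * X T j j) + - rsum n (fun j => X 0 i j) + eps * rsum n (fun j => Id i j)).
    { rewrite <- rsum_opp, <- rsum_scal, <- !rsum_plus. apply rsum_ext. intros j Hj. rewrite HJdX by auto.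
      unfold madd, msub, mscal, ones. ring. }
    rewrite (rsum_single n (fun j => X 0 i j) i) in E; auto.
    2:{ intros k Hk Hne. apply Hdiag; auto. }
    rewrite (rsum_single n (fun j => Id i j) i) in E; auto.
    2:{ intros k Hk Hne. unfold Id. apply Nat.eqb_neq in Hne. rewrite Nat.eqb_sym, Hne. auto. }
    assert (Id i i = 1) by (unfold Id; rewrite Nat.eqb_refl; auto). rewrite H in E. lra. }
  assert (HJv0 : forall i, (i < n)%nat -> 0 <= rsum n (fun j => Jd i j * X T j j)).
  { intros i Hi. apply rsum_nonneg. intros j Hj. apply Rmult_le_pos. apply HJdnn; auto.
    left; apply Xpos; auto. }
  assert (Heps0 : forall i, (i < n)%nat -> eps <= X 0 i i).
  { intros i Hi. pose proof (HJv i Hi); pose proof (HJv0 i Hi); lra. }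
  split; [exact Hmetz|]. split; [exact HJdnn|]. split.
  {
    intros Psi HP0 HPd i Hi.
    set (v0 := fun j => X 0 j j).
    set (w := fun s k => mvec n (Psi s) v0 k).
    assert (IdE : forall k j, k <> j -> Id k j = 0).
    { intros k j Hne. unfold Id. apply Nat.eqb_neq in Hne. rewrite Hne. auto. }
    assert (IdD : forall k, Id k k = 1) by (intros; unfold Id; rewrite Nat.eqb_refl; auto).
    assert (Hw0 : forall k, (k < n)%nat -> w 0 k = X 0 k k).
    { intros k Hk. unfold w, mvec. rewrite (rsum_single n (fun j => Psi 0 k j * v0 j) k); auto.
      - rewrite HP0, IdD by auto. unfold v0; ring.
      - intros j Hj Hne. rewrite HP0, IdE by auto. ring. }
    assert (Hwd : forall s, Icc 0 T s -> forall k, (k < n)%nat ->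
              deriv_within (Icc 0 T) (fun h => w h k) s (mvec n (mmul n (Ac s) (Psi s)) v0 k)).
    { intros s Hs k Hk. unfold w, mvec.
      apply (deriv_rsum (Icc 0 T) n (fun j h => Psi h k j * v0 j) (fun j => mmul n (Ac s) (Psi s) k j * v0 j) s).
      intros j Hj. apply deriv_scal with (f := fun h => Psi h k j). apply HPd; auto. }
    assert (Hw : forall k, (k < n)%nat -> w T k <= X T k k).
    { intros k Hk. cut (0 <= X T k k - w T k); [lra|].
      apply le_eps with (b := X T k k). intros dl Hdl.
      assert (C := comparison n 0 T (fun s k => (1 + dl) * X s k k + (-1) * w s k)
                     (fun k => dl * X 0 k k)
                     (fun s k => (1 + dl) * dX s k k + (-1) * mvec n (mmul n (Ac s) (Psi s)) v0 k)
                     Ac HT).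
      assert (Hz : 0 <= (1 + dl) * X T k k + (-1) * w T k).
      { apply C; auto; try lra.
        - intros j Hj. apply Rmult_lt_0_compat; auto.
        - intros j Hj. apply ctw_lim with (D := Icc 0 T).
          + eapply deriv_ctw. apply deriv_lin; [apply HdX; auto|apply Hwd; auto].
          + cbv beta. rewrite Hw0 by auto. ring.
          + exists T; split; auto. intros h Hh Hr. unfold Icc. rewrite Rabs_right in Hr; lra.
        - intros t Ht j Hj. eapply deriv_transport with (s := 0) (r := 1).
          + apply deriv_lin; [apply (HdX t ltac:(unfold Icc; lra)); auto|apply (Hwd t ltac:(unfold Icc; lra)); auto].
          + lra.
          + ring.
          + intros h Hh _. rewrite Rplus_0_r. split; [unfold Icc; lra|auto].
          + auto.
        - intros t Ht. apply Hmetz. unfold Icc; lra.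
        - intros t Ht j Hj. cbv beta.
          assert (E := mvec_lin n (Ac t) (fun j => X t j j) (fun j => w t j) (1 + dl) (-1) j).
          cbv beta in E. rewrite E. unfold w. rewrite mvec_assoc.
          pose proof (Hg t ltac:(unfold Icc; lra) j Hj).
          assert ((1 + dl) * mvec n (Ac t) (fun j0 => X t j0 j0) j < (1 + dl) * dX t j j)
            by (apply Rmult_lt_compat_l; lra).
          lra. }
      lra. }
    assert (DR : forall M i j, (j < n)%nat -> mmul n M (X 0) i j = M i j * X 0 j j).
    { intros M i0 j Hj. unfold mmul. apply (rsum_single n (fun k => M i0 k * X 0 k j)); auto.
      intros k Hk Hne. rewrite (Hdiag 0 Icc0 k j); auto; ring. }
    unfold vec_neg. 
    assert (E : mvec n (mmul n (msub (mmul n Jd (Psi T)) Id) (X 0)) ones i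
              = mvec n Jd (fun j => w T j) i - X 0 i i).
    { unfold mvec at 1.
      transitivity (rsum n (fun j => mmul n Jd (Psi T) i j * v0 j) + - rsum n (fun j => Id i j * v0 j)).
      { rewrite <- rsum_opp, <- rsum_plus. apply rsum_ext; intros j Hj. rewrite DR by auto.
        unfold msub, ones, v0; ring. }
      rewrite (rsum_single n (fun j => Id i j * v0 j) i); auto.
      2:{ intros k Hk Hne. rewrite IdE by auto. ring. }
      unfold w. rewrite mvec_assoc. rewrite IdD. unfold mvec, v0. ring. }
    rewrite E.
    assert (mvec n Jd (fun j => w T j) i <= rsum n (fun j => Jd i j * X T j j)).
    { unfold mvec. apply rsum_le. intros j Hj. apply Rmult_le_compat_l; [apply HJdnn; auto|apply Hw; auto]. }
    pose proof (HJv i Hi). lra. }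

  assert (mvec_nn : forall u, (forall j, (j < n)%nat -> 0 <= u j) -> forall i, (i < n)%nat -> 0 <= mvec n Jd u i).
  { intros u Hu i Hi. unfold mvec. apply rsum_nonneg. intros j Hj. apply Rmult_le_pos; auto. }
  assert (Flow : forall x, closed_loop_sol n Ac Jd T x -> forall (k : nat) sg c, 0 <= c ->
     (forall i, (i < n)%nat -> 0 <= c * X 0 i i + sg * mvec n Jd (x (INR k * T)) i) ->
     forall t, INR k * T < t <= INR k * T + T -> forall i, (i < n)%nat ->
       0 <= c * X (t - INR k * T) i i + sg * x t i).
  { intros x Hx k sg c Hc Hini t Ht i Hi.
    destruct (Hx k) as [Hlim Hder].
    set (a := INR k * T) in *.
    cut (0 <= c * X (t - a) i i + sg * x t i + 0); [lra|].
    apply le_eps with (b := X (t - a) i i). intros dl Hdl.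
    assert (C := comparison n a (a + T) (fun s j => (c + dl) * X (s - a) j j + sg * x s j)
                   (fun j => (c + dl) * X 0 j j + sg * mvec n Jd (x a) j)
                   (fun s j => (c + dl) * dX (s - a) j j + sg * mvec n (Ac (s - a)) (x s) j)
                   (fun s => Ac (s - a)) ltac:(lra)).
    assert (Hz : 0 <= (c + dl) * X (t - a) i i + sg * x t i).
    { apply C; auto.
      - intros j Hj. pose proof (Hini j Hj). pose proof (HX0 j Hj).
        assert (0 < dl * X 0 j j) by (apply Rmult_lt_0_compat; auto). lra.
      - intros j Hj.
        assert (XL0 : limit1_in (fun s => X s j j) (Icc 0 T) (X 0 j j) 0).
        { apply ctw_lim with (D := Icc 0 T); auto.
          eapply deriv_ctw. apply HdX; auto. exists 1; split; [lra|auto]. }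
        assert (XL : limit1_in (fun s => X (s - a) j j) (fun s => a < s) (X 0 j j) a).
        { eapply lim_transport with (s := - a) (r := T); [exact XL0|lra|ring|].
          intros h Hh Hr. rewrite Rabs_right in Hr by lra. split.
          - unfold Icc; lra.
          - replace (h + - a) with (h - a) by ring. auto. }
        exact (limit_plus _ _ _ _ _ _ (limit_mul _ _ _ _ _ _ (lim_const _ (c + dl) a) XL)
                 (limit_mul _ _ _ _ _ _ (lim_const _ sg a) (Hlim j Hj))).
      - intros s Hs j Hj. apply deriv_lin.
        + eapply deriv_transport with (s := - a) (r := 1).
          * apply (HdX (s - a) ltac:(unfold Icc; lra) j j Hj Hj).
          * lra.
          * ring.
          * intros h Hh _. replace (h + - a) with (h - a) by ring. split; [unfold Icc; lra|auto].
          * auto.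
        + apply Hder; auto.
      - intros s Hs. apply Hmetz. unfold Icc; lra.
      - intros s Hs j Hj. cbv beta.
        assert (E := mvec_lin n (Ac (s - a)) (fun j => X (s - a) j j) (x s) (c + dl) sg j).
        cbv beta in E. rewrite E.
        pose proof (Hg (s - a) ltac:(unfold Icc; lra) j Hj).
        assert ((c + dl) * mvec n (Ac (s - a)) (fun j0 => X (s - a) j0 j0) j < (c + dl) * dX (s - a) j j)
          by (apply Rmult_lt_compat_l; lra).
        lra. }
    lra. }
  split.
  {
    intros x Hx Hx0.
    assert (Hk : forall k : nat, forall i, (i < n)%nat -> 0 <= x (INR k * T) i).
    { induction k.
      - simpl. rewrite Rmult_0_l. auto.
      - replace (INR (S k) * T) with (INR k * T + T) by (rewrite S_INR; ring).
        intros i Hi.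
        assert (F := Flow x Hx k 1 0 (Rle_refl 0)).
        assert (HH : 0 <= 0 * X (INR k * T + T - INR k * T) i i + 1 * x (INR k * T + T) i).
        { apply F; auto; try lra. intros j Hj. pose proof (mvec_nn _ IHk j Hj). lra. }
        lra. }
    intros t Ht i Hi. destruct (Req_dec t 0) as [->|Ht0]; auto.
    destruct (find_k T t HT ltac:(lra)) as [k Hkt].
    assert (F := Flow x Hx k 1 0 (Rle_refl 0)).
    assert (HH : 0 <= 0 * X (t - INR k * T) i i + 1 * x t i).
    { apply F; auto. intros j Hj. pose proof (mvec_nn _ (Hk k) j Hj). lra. }
    lra. }
  set (Jmax := rsum n (fun i => rsum n (fun j => Jd i j))).
  set (V' := eps + rsum n (fun i => X 0 i i)).
  set (rho := 1 - eps / V').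
  assert (HJmax : forall i j, (i < n)%nat -> (j < n)%nat -> Jd i j <= Jmax).
  { intros i j Hi Hj. unfold Jmax.
    apply Rle_trans with (rsum n (fun j => Jd i j)).
    - apply (rsum_ge_term n (fun j => Jd i j)); auto; try (intros; apply HJdnn; auto).
    - apply (rsum_ge_term n (fun i => rsum n (fun j => Jd i j))); auto.
      try (intros; apply rsum_nonneg; intros; apply HJdnn; auto). }
  assert (HJmax0 : 0 <= Jmax) by (unfold Jmax; apply rsum_nonneg; intros; apply rsum_nonneg; intros; apply HJdnn; auto).
  assert (HsX : 0 <= rsum n (fun i => X 0 i i)) by (apply rsum_nonneg; intros; left; auto).
  assert (HV : 0 < V') by (unfold V'; lra).
  assert (HX0V : forall i, (i < n)%nat -> X 0 i i <= V').
  { intros i Hi. unfold V'. pose proof (rsum_ge_term n (fun i => X 0 i i) i Hi ltac:(intros; left; auto)). lra. }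
  assert (Hrho : 0 <= rho < 1).
  { unfold rho. assert (0 < eps / V') by (apply Rdiv_lt_0_compat; auto).
    assert (eps / V' <= 1). { apply Rmult_le_reg_r with V'; auto. unfold Rdiv. rewrite Rmult_assoc, Rinv_l by lra. unfold V'; lra. }
    lra. }
  assert (Hrho2 : forall i, (i < n)%nat -> X 0 i i - eps <= rho * X 0 i i).
  { intros i Hi. unfold rho.
    assert (eps / V' * X 0 i i <= eps).
    { unfold Rdiv. rewrite Rmult_assoc. rewrite <- (Rmult_1_r eps) at 2. apply Rmult_le_compat_l; [lra|].
      apply Rmult_le_reg_l with V'; auto. rewrite <- Rmult_assoc, Rinv_r by lra. rewrite Rmult_1_l, Rmult_1_r. auto. }
    lra. }
  assert (powle1 : forall k, rho ^ k <= 1).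
  { induction k; simpl; [lra|]. pose proof (pow_le rho k ltac:(lra)). nra. }
  destruct (fin_max n (fun i B => forall s, Icc 0 T s -> X s i i <= B)) as [Vb HVb].
  { intros i B B' HB H s Hs. specialize (H s Hs). lra. }
  { intros i Hi. apply bounded_on; [lra|]. intros t Ht. eapply deriv_ctw. apply HdX; auto. }
  set (Vb0 := Rmax Vb 0).
  assert (HVb0 : 0 <= Vb0) by apply Rmax_r.
  assert (HVb1 : forall s, Icc 0 T s -> forall i, (i < n)%nat -> X s i i <= Vb0).
  { intros s Hs i Hi. eapply Rle_trans; [apply HVb; auto|apply Rmax_l]. }
  assert (Bnd : forall x, closed_loop_sol n Ac Jd T x -> forall (k : nat) t,
            INR k * T < t <= INR k * T + T ->
            vnorm n (x t) <= INR n * (Jmax * vnorm n (x 0) / eps) * Vb0 * rho ^ k).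
  { intros x Hx.
    set (Cx := Jmax * vnorm n (x 0) / eps).
    assert (HCx : 0 <= Cx).
    { unfold Cx. apply Rmult_le_pos. apply Rmult_le_pos; auto. apply rsum_nonneg; intros; apply Rabs_pos.
      left; apply Rinv_0_lt_compat; auto. }
    assert (FB : forall k, (forall i, (i < n)%nat -> Rabs (mvec n Jd (x (INR k * T)) i) <= Cx * rho ^ k * X 0 i i) ->
                 forall t, INR k * T < t <= INR k * T + T -> forall i, (i < n)%nat ->
                 Rabs (x t i) <= Cx * rho ^ k * X (t - INR k * T) i i).
    { intros k Hq t Ht i Hi.
      assert (Hc : 0 <= Cx * rho ^ k) by (apply Rmult_le_pos; auto; apply pow_le; lra).
      assert (F1 := Flow x Hx k 1 _ Hc).
      assert (F2 := Flow x Hx k (-1) _ Hc).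
      assert (A1 : 0 <= Cx * rho ^ k * X (t - INR k * T) i i + 1 * x t i).
      { apply F1; auto. intros j Hj. pose proof (Hq j Hj). pose proof (Rle_abs (-(mvec n Jd (x (INR k * T)) j))).
        rewrite Rabs_Ropp in H0. lra. }
      assert (A2 : 0 <= Cx * rho ^ k * X (t - INR k * T) i i + -1 * x t i).
      { apply F2; auto. intros j Hj. pose proof (Hq j Hj). pose proof (Rle_abs (mvec n Jd (x (INR k * T)) j)). lra. }
      apply Rabs_le. lra. }
    assert (Q : forall k, forall i, (i < n)%nat -> Rabs (mvec n Jd (x (INR k * T)) i) <= Cx * rho ^ k * X 0 i i).
    { induction k.
      - intros i Hi. simpl. rewrite Rmult_0_l, Rmult_1_r.
        eapply Rle_trans; [apply rsum_abs|].
        apply Rle_trans with (rsum n (fun j => Jmax * Rabs (x 0 j))).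
        { apply rsum_le. intros j Hj. rewrite Rabs_mult, (Rabs_right (Jd i j)) by (apply Rle_ge, HJdnn; auto).
          apply Rmult_le_compat_r; [apply Rabs_pos|auto]. }
        rewrite rsum_scal. fold (vnorm n (x 0)).
        apply Rle_trans with (Cx * eps).
        + unfold Cx. right. field. lra.
        + apply Rmult_le_compat_l; auto.
      - intros i Hi.
        replace (INR (S k) * T) with (INR k * T + T) by (rewrite S_INR; ring).
        assert (Hc : 0 <= Cx * rho ^ k) by (apply Rmult_le_pos; auto; apply pow_le; lra).
        eapply Rle_trans; [apply rsum_abs|].
        apply Rle_trans with (rsum n (fun j => Jd i j * (Cx * rho ^ k * X T j j))).
        { apply rsum_le. intros j Hj. rewrite Rabs_mult, (Rabs_right (Jd i j)) by (apply Rle_ge, HJdnn; auto).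
          apply Rmult_le_compat_l; [apply HJdnn; auto|].
          pose proof (FB k IHk (INR k * T + T) ltac:(lra) j Hj) as HH.
          replace (INR k * T + T - INR k * T) with T in HH by ring. exact HH. }
        replace (rsum n (fun j => Jd i j * (Cx * rho ^ k * X T j j)))
          with ((Cx * rho ^ k) * rsum n (fun j => Jd i j * X T j j)).
        2:{ rewrite <- rsum_scal. apply rsum_ext; intros; ring. }
        apply Rle_trans with (Cx * rho ^ k * (X 0 i i - eps)).
        { apply Rmult_le_compat_l; auto. }
        simpl. pose proof (Hrho2 i Hi).
        replace (Cx * (rho * rho ^ k) * X 0 i i) with (Cx * rho ^ k * (rho * X 0 i i)) by ring.
        apply Rmult_le_compat_l; auto. }
    intros k t Ht. unfold vnorm.
    apply Rle_trans with (rsum n (fun _ => Cx * rho ^ k * Vb0)).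
    - apply rsum_le. intros i Hi. eapply Rle_trans; [apply (FB k (Q k) t Ht i Hi)|].
      apply Rmult_le_compat_l. apply Rmult_le_pos; auto; apply pow_le; lra.
      apply HVb1; auto. unfold Icc; lra.
    - rewrite rsum_const. fold Cx. right; ring. }
  assert (vn0 : forall v, 0 <= vnorm n v) by (intros; apply rsum_nonneg; intros; apply Rabs_pos).
  split.
  - intros e He. set (K := INR n * (Jmax / eps) * Vb0).
    assert (HK : 0 <= K).
    { unfold K. apply Rmult_le_pos; auto. apply Rmult_le_pos. apply pos_INR.
      apply Rmult_le_pos; auto. left; apply Rinv_0_lt_compat; auto. }
    exists (e / (K + 1)). split. apply Rdiv_lt_0_compat; lra.
    intros x Hx Hv t Ht.
    assert (Hd : e / (K + 1) <= e).
    { apply Rmult_le_reg_r with (K + 1); [lra|]. unfold Rdiv. rewrite Rmult_assoc, Rinv_l by lra. nra. }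
    assert (HKd : K * (e / (K + 1)) < e).
    { apply Rmult_lt_reg_r with (K + 1); [lra|]. unfold Rdiv.
      replace (K * (e * / (K + 1)) * (K + 1)) with (K * e) by (field; lra). nra. }
    destruct (Req_dec t 0) as [->|Ht0]; [lra|].
    destruct (find_k T t HT ltac:(lra)) as [k Hkt].
    pose proof (Bnd x Hx k t Hkt) as HB.
    assert (E : INR n * (Jmax * vnorm n (x 0) / eps) * Vb0 = K * vnorm n (x 0)).
    { unfold K. field. lra. }
    rewrite E in HB. pose proof (powle1 k). pose proof (pow_le rho k ltac:(lra)).
    pose proof (vn0 (x 0)).
    assert (K * vnorm n (x 0) * rho ^ k <= K * vnorm n (x 0)).
    { rewrite <- (Rmult_1_r (K * vnorm n (x 0))) at 2. apply Rmult_le_compat_l; auto. apply Rmult_le_pos; auto. }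
    assert (K * vnorm n (x 0) <= K * (e / (K + 1))) by (apply Rmult_le_compat_l; lra).
    lra.
  - intros x Hx e He.
    set (W := INR n * (Jmax * vnorm n (x 0) / eps) * Vb0 + 1).
    assert (HW0 : 0 <= W - 1).
    { unfold W. replace (INR n * (Jmax * vnorm n (x 0) / eps) * Vb0 + 1 - 1)
        with (INR n * (Jmax * vnorm n (x 0) / eps) * Vb0) by ring.
      apply Rmult_le_pos; auto. apply Rmult_le_pos. apply pos_INR.
      apply Rmult_le_pos. apply Rmult_le_pos; auto. left; apply Rinv_0_lt_compat; auto. }
    destruct (pow_lt_1_zero rho ltac:(rewrite Rabs_right; lra) (e / W) ltac:(apply Rdiv_lt_0_compat; lra)) as [N HN].
    exists (INR N * T + T). intros t Ht.
    assert (HN0 : 0 <= INR N * T) by (apply Rmult_le_pos; [apply pos_INR|lra]).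
    destruct (find_k T t HT ltac:(lra)) as [k Hkt].
    assert (HkN : (k >= N)%nat).
    { destruct (Compare_dec.le_lt_dec N k); auto. exfalso.
      assert (INR (S k) <= INR N) by (apply le_INR; lia).
      rewrite S_INR in H. assert ((INR k + 1) * T <= INR N * T) by (apply Rmult_le_compat_r; lra). lra. }
    specialize (HN k HkN). rewrite Rabs_right in HN by (apply Rle_ge, pow_le; lra).
    pose proof (Bnd x Hx k t Hkt) as HB. fold W in HB.
    pose proof (pow_le rho k ltac:(lra)).
    replace (INR n * (Jmax * vnorm n (x 0) / eps) * Vb0) with (W - 1) in HB by (unfold W; ring).
    assert (W * rho ^ k < e).
    { apply Rmult_lt_reg_r with (/ W). apply Rinv_0_lt_compat; lra.
      replace (W * rho ^ k * / W) with (rho ^ k) by (field; lra). exact HN. }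
    nra.
Qed.
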